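(* Under the standing assumptions of the context, \[ \sum_{\ell\in\mathbb N:\ \mathcal K_\ell\ne\emptyset}\frac1\ell<\infty . \]
   Context: Standing assumptions: $A=\{0,1\}$, $\Sigma=A^{\mathbb N_0}$ with metric $\rho(y,z)=2^{-\min\{i\ge0:\,y_i\ne z_i\}}$ ($y\ne z$) and shift $\sigma$. $\zeta:A\to A^*$ is a binary substitution of constant length $q\ge2$, primitive (for some $k$, every letter occurs in $\zeta^k(a)$ for all $a$), aperiodic (its subshift $X_\zeta$ contains a non-$\sigma$-periodic sequence), with $\zeta(0)$ starting with $0$; $x=\lim_k\zeta^k(0)$ is its fixed point starting with $0$. In the infinite recurrence plot $R(x,\infty,1/2)$ (indices $i,j\in\mathbb N_0$, entry $1$ iff $x_i=x_j$), a line of length $\ell$ is $(i,j,\ell)$ with $i\ne j$, entries $(i+k,j+k)=1$ for $0\le k<\ell$, entry $(i-1,j-1)=0$ if $\min\{i,j\}>0$, entry $(i+\ell,j+\ell)=0$; it is inner if $\min\{i,j\}>0$. $\mathcal K_\ell=\{(i,j)\in\mathbb N^2:(i,j,\ell)\text{ is an inner line in }R(x,\infty,1/2)\}$. *)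

(* Defs.v *)
From mathcomp Require Import all_boot all_order all_algebra.
From mathcomp Require Import all_classical all_reals all_analysis.
From mathcomp Require Import Rstruct Rstruct_topology.
Set Implicit Arguments. Unset Strict Implicit. Unset Printing Implicit Defensive.

(* Alphabet A = {0,1} is encoded as bool, with 0 = false and 1 = true.
   Sequences in Sigma = A^{N_0} are functions nat -> bool. *)

Definition subst_word (zeta : bool -> seq bool) (w : seq bool) : seq bool :=
  flatten (map zeta w).

Definition subst_iter (zeta : bool -> seq bool) (k : nat) (w : seq bool) :=
  iter k (subst_word zeta) w.

Definition const_length (zeta : bool -> seq bool) (q : nat) : Prop :=
  forall a : bool, size (zeta a) = q.

Definition primitive (zeta : bool -> seq bool) : Prop :=
  exists k : nat, forall a b : bool, b \in subst_iter zeta k [:: a].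

Definition window (y : nat -> bool) (n m : nat) : seq bool :=
  mkseq (fun i => y (n + i)) m.

Definition in_subshift (zeta : bool -> seq bool) (y : nat -> bool) : Prop :=
  forall n m : nat, exists (k : nat) (a : bool),
    infix (window y n m) (subst_iter zeta k [:: a]).

Definition shift_periodic (y : nat -> bool) : Prop :=
  exists p : nat, 0 < p /\ forall i, y (i + p) = y i.

Definition aperiodic (zeta : bool -> seq bool) : Prop :=
  exists y : nat -> bool, in_subshift zeta y /\ ~ shift_periodic y.

(* x = lim_k zeta^k(0): every zeta^k(0) is a prefix of x *)
Definition is_limit_fixed_point (zeta : bool -> seq bool) (x : nat -> bool) : Prop :=
  forall k i : nat, i < size (subst_iter zeta k [:: false]) ->
    x i = nth false (subst_iter zeta k [:: false]) i.

(* entry (i,j) of the infinite recurrence plot R(x, oo, 1/2):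
   1 iff x_i = x_j *)
Definition RP (x : nat -> bool) (i j : nat) : bool := x i == x j.

Definition is_line (x : nat -> bool) (i j l : nat) : Prop :=
  [/\ i != j,
      (forall k, k < l -> RP x (i + k) (j + k)),
      (0 < minn i j -> ~~ RP x i.-1 j.-1)
    & ~~ RP x (i + l) (j + l)].

Definition in_K (x : nat -> bool) (l i j : nat) : Prop :=
  [/\ 0 < i, 0 < j, 0 < minn i j & is_line x i j l].

Definition K_nonempty (x : nat -> bool) (l : nat) : Prop :=
  exists i j : nat, in_K x l i j.

(* Main.v *)
Require Import Defs.
From mathcomp Require Import all_boot all_order all_algebra.
From mathcomp Require Import all_classical all_reals all_analysis.
From mathcomp Require Import Rstruct Rstruct_topology.
From mathcomp Require Import zify ring lra.
From Stdlib Require Import Classical.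
Import Order.TTheory GRing.Theory Num.Theory.


Lemma iterS' (zeta : bool -> seq bool) k w :
  subst_iter zeta k.+1 w = subst_word zeta (subst_iter zeta k w).
Proof. by rewrite /subst_iter iterS. Qed.

Lemma size_subst_word zeta q w : const_length zeta q ->
  size (subst_word zeta w) = q * size w.
Proof.
move=> hc; elim: w => [|a w IH]; first by rewrite muln0.
by rewrite /subst_word /= size_cat -/(subst_word zeta w) IH hc mulnS.
Qed.

Lemma size_iter zeta q k w : const_length zeta q ->
  size (subst_iter zeta k w) = q ^ k * size w.
Proof.
move=> hc; elim: k => [|k IH]; first by rewrite expn0 mul1n.
by rewrite iterS' (size_subst_word _ _ _ hc) IH expnS mulnA.
Qed.

Lemma nth_subst_word zeta q w t r : const_length zeta q ->
  t < size w -> r < q ->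
  nth false (subst_word zeta w) (q * t + r) = nth false (zeta (nth false w t)) r.
Proof.
move=> hc; elim: w t => [|a w IH] [|t] //= ht hr.
  by rewrite /subst_word /= muln0 add0n nth_cat hc hr.
rewrite /subst_word /= nth_cat hc -/(subst_word zeta w).
rewrite ifF; last by apply/negbTE; rewrite -leqNgt; nia.
have -> : q * t.+1 + r - q = q * t + r by rewrite mulnS -addnA addKn.
exact: IH.
Qed.

Lemma x_block zeta q x s r : (2 <= q) -> const_length zeta q ->
  is_limit_fixed_point zeta x -> r < q ->
  x (q * s + r) = nth false (zeta (x s)) r.
Proof.
move=> q2 hc hx hr.
set k := q * s + r.
have hk : k < q ^ k := ltn_expl _ q2.
have hs : s < q ^ k.
  apply: leq_ltn_trans hk; rewrite /k; nia.
rewrite (hx k.+1); last by rewrite (size_iter _ _ _ _ hc) /= muln1 expnS; nia.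
rewrite iterS' (nth_subst_word _ _ _ _ _ hc) //; last by rewrite (size_iter _ _ _ _ hc) /= muln1.
by rewrite -hx // (size_iter _ _ _ _ hc) /= muln1.
Qed.

Lemma x_blockK zeta q x m s r : (2 <= q) -> const_length zeta q ->
  is_limit_fixed_point zeta x -> r < q ^ m ->
  x (q ^ m * s + r) = nth false (subst_iter zeta m [:: x s]) r.
Proof.
move=> q2 hc hx; elim: m s r => [|m IH] s r.
  by rewrite expn0 ltnS leqn0 => /eqP ->; rewrite mul1n addn0.
move=> hr.
have q0 : 0 < q by apply: leq_trans q2.
have ht : r %/ q < q ^ m by rewrite ltn_divLR // -expnSr.
have hr' : r %% q < q by rewrite ltn_mod.
have -> : q ^ m.+1 * s + r = q * (q ^ m * s + r %/ q) + r %% q.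
  by rewrite {1}(divn_eq r q) expnS mulnDr mulnA addnA [_ * q]mulnC.
rewrite (x_block _ _ _ _ _ q2 hc hx hr') IH // iterS' {3}(divn_eq r q) [_ * q]mulnC.
by rewrite (nth_subst_word _ _ _ _ _ hc) // (size_iter _ _ _ _ hc) /= muln1.
Qed.


Lemma occ_letter zeta q x a : 2 <= q -> const_length zeta q ->
  is_limit_fixed_point zeta x -> primitive zeta -> exists s, x s = a.
Proof.
move=> q2 hc hx [p hp]; have hin := hp false a.
exists (index a (subst_iter zeta p [:: false])).
rewrite (hx p); first exact: nth_index.
by rewrite index_mem.
Qed.

Lemma nth_cat3 (pre w suf : seq bool) r : r < size w ->
  nth false (pre ++ w ++ suf) (size pre + r) = nth false w r.
Proof. by move=> hr; rewrite nth_cat ltnNge leq_addr /= addKn nth_cat hr. Qed.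

Lemma periodic_false zeta q x P : 2 <= q -> const_length zeta q ->
  is_limit_fixed_point zeta x -> primitive zeta -> aperiodic zeta ->
  0 < P -> (forall n, x (n + P) = x n) -> False.
Proof.
move=> q2 hc hx hpr [y [hy hny]] P0 hP; apply: hny; exists P; split => // n.
have [k [a hin]] := hy n P.+1.
have [s hs] := occ_letter zeta q x a q2 hc hx hpr.
move/infixP: hin => [pre [suf he]].
have hsz : size pre + P.+1 + size suf = q ^ k.
  by rewrite -(muln1 (q ^ k)) -[1]/(size [:: a]) -(size_iter _ _ k [:: a] hc) he !size_cat size_mkseq addnA.
have key : forall r, r < P.+1 -> y (n + r) = x (q ^ k * s + (size pre + r)).
  move=> r hr; rewrite (x_blockK zeta) //; last by lia.
  by rewrite hs he nth_cat3 ?size_mkseq // nth_mkseq.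
rewrite (key P) // -[n]addn0 (key 0) // addn0 addnA hP //.
Qed.

Lemma rec_prefix zeta q x M : 2 <= q -> const_length zeta q ->
  is_limit_fixed_point zeta x -> primitive zeta ->
  exists K, forall sg, exists ofs, ofs + M <= q ^ K /\
    forall r, r < M -> x (q ^ K * sg + ofs + r) = x r.
Proof.
move=> q2 hc hx [p hp]; exists (M + p) => sg.
set w := subst_iter zeta p [:: x sg].
have hin := hp (x sg) false.
set o1 := index false w.
have ho1 : o1 < q ^ p by rewrite -(muln1 (q ^ p)) -(size_iter _ _ p [:: x sg] hc) index_mem.
have hxo : x (q ^ p * sg + o1) = false by rewrite (x_blockK zeta) // nth_index.
have hM : M < q ^ M := ltn_expl _ q2.
exists (q ^ M * o1); split.
  rewrite expnD.
  have : q ^ M * o1 + q ^ M <= q ^ M * q ^ p by rewrite addnC -mulnS leq_mul2l ho1 orbT.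
  lia.
move=> r hr.
have -> : q ^ (M + p) * sg + q ^ M * o1 + r = q ^ M * (q ^ p * sg + o1) + r.
  by rewrite expnD mulnDr mulnA.
rewrite (x_blockK zeta) //; last by lia.
rewrite hxo (hx M r) //.
by rewrite (size_iter _ _ _ _ hc) /= muln1; lia.
Qed.

Lemma period2 zeta q x : 2 <= q -> const_length zeta q ->
  is_limit_fixed_point zeta x -> primitive zeta ->
  (forall M, exists s, forall k, k < M -> x (s + k + 2) = x (s + k)) ->
  forall n, x (n + 2) = x n.
Proof.
move=> q2 hc hx hpr H n.
have [K hK] := rec_prefix zeta q x (n + 3) q2 hc hx hpr.
set Q := q ^ K.
have Q0 : 0 < Q by rewrite expn_gt0; lia.
have [s hs] := H (2 * Q).
have [ofs [ho hox]] := hK (s %/ Q + 1).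
have hd := divn_eq s Q.
have hm : s %% Q < Q by rewrite ltn_mod.
set d := s %/ Q in hd ho hox *.
set rr := s %% Q in hd hm.
have e1 : Q * (d + 1) = d * Q + Q by rewrite mulnDr muln1 mulnC.
rewrite -/Q in hox; rewrite e1 in hox.
rewrite -(hox n) ?addn3 //; last by lia.
rewrite -(hox (n + 2)); last by lia.
rewrite -/Q in ho.
have hk0 : d * Q + Q + ofs + n = s + (d * Q + Q + ofs + n - s) by lia.
rewrite addnA hk0; apply: hs; lia.
Qed.

Lemma zeta_neq zeta q x : 2 <= q -> const_length zeta q ->
  is_limit_fixed_point zeta x -> primitive zeta -> aperiodic zeta ->
  zeta false != zeta true.
Proof.
move=> q2 hc hx hpr hap; apply/negP => /eqP he.
have q0 : 0 < q by lia.
have hz : forall b, zeta b = zeta false by case.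
apply: (periodic_false zeta q x q q2 hc hx hpr hap q0) => n.
rewrite {1 2}(divn_eq n q) [_ * q]mulnC.
have -> : q * (n %/ q) + n %% q + q = q * (n %/ q + 1) + n %% q by lia.
by rewrite !(x_block _ _ _ _ _ q2 hc hx) ?ltn_mod // !hz.
Qed.


Lemma col_xor (U : bool -> nat -> bool) r c : U false r != U true r ->
  U c r = U false r (+) c.
Proof. by case: c; case: (U false r); case: (U true r). Qed.

Lemma col_const (U : bool -> nat -> bool) r c : ~~ (U false r != U true r) ->
  U c r = U false r.
Proof. by case: c; case: (U false r); case: (U true r). Qed.

Lemma core (U : bool -> nat -> bool) q e (al be : nat -> bool) Kb :
  0 < e -> e < q -> (exists r, r < q /\ U false r != U true r) ->
  (forall k r, k < Kb -> r < q -> U (al k) r =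
     if r + e < q then U (be k) (r + e) else U (be k.+1) (r + e - q)) ->
  forall k, k.+2 < Kb -> al k.+2 = al k.
Proof.
move=> e0 eq [r0 [hr0 hn0]] H.
pose nc r := U false r != U true r.
case: (classic (exists r, [/\ r < q, nc r, r + e < q & ~~ nc (r + e)])).
  move=> [r [hrq hnc hre hnn]] k hk.
  have E : forall k, k < Kb -> al k = U false r (+) U false (r + e).
    move=> k' hk'; have := H k' r hk' hrq; rewrite hre (col_xor U r (al k') hnc).
    rewrite (col_const U (r + e) (be k') hnn).
    by case: (al k'); case: (U false r); case: (U false (r + e)).
  by rewrite !E //; lia.
move=> nA.
case: (classic (exists r, [/\ r < q, nc r, q <= r + e & ~~ nc (r + e - q)])).
  move=> [r [hrq hnc hre hnn]] k hk.
  have E : forall k, k < Kb -> al k = U false r (+) U false (r + e - q).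
    move=> k' hk'; have := H k' r hk' hrq; rewrite ltnNge hre /= (col_xor U r (al k') hnc).
    rewrite (col_const U (r + e - q) (be k'.+1) hnn).
    by case: (al k'); case: (U false r); case: (U false (r + e - q)).
  by rewrite !E //; lia.
move=> nB.
have C1 : forall r, r < q -> nc r -> r + e < q -> nc (r + e).
  move=> r hr hnc hre; case h: (nc (r + e)) => //; exfalso; apply: nA; exists r; split => //; by rewrite h.
have C2 : forall r, r < q -> nc r -> q <= r + e -> nc (r + e - q).
  move=> r hr hnc hre; case h: (nc (r + e - q)) => //; exfalso; apply: nB; exists r; split => //; by rewrite h.
have exP : exists r, (r < q) && nc r by exists r0; rewrite hr0.
case: (ex_minnP exP) => r1 /andP [hr1 hnc1] hmin.
have hr1e : r1 + e < q.
  rewrite ltnNge; apply/negP => hle.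
  have := hmin (r1 + e - q); rewrite C2 // andbT.
  have -> : r1 + e - q < q by lia.
  move=> /(_ isT); lia.
have ubP : forall r, (r < q) && nc r -> r <= q by move=> r /andP [h _]; lia.
case: (ex_maxnP exP ubP) => r2 /andP [hr2 hnc2] hmax.
have hr2e : q <= r2 + e.
  rewrite leqNgt; apply/negP => hlt.
  have := hmax (r2 + e); rewrite C1 // andbT hlt => /(_ isT); lia.
have nc1 := C1 r1 hr1 hnc1 hr1e.
have nc2 := C2 r2 hr2 hnc2 hr2e.
have E1 : forall k, k < Kb -> al k (+) be k = U false r1 (+) U false (r1 + e).
  move=> k hk; have := H k r1 hk hr1; rewrite hr1e (col_xor U r1 (al k) hnc1).
  rewrite (col_xor U (r1 + e) (be k) nc1).
  by case: (al k); case: (be k); case: (U false r1); case: (U false (r1 + e)).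
have E2 : forall k, k < Kb -> al k (+) be k.+1 = U false r2 (+) U false (r2 + e - q).
  move=> k hk; have := H k r2 hk hr2; rewrite ltnNge hr2e /= (col_xor U r2 (al k) hnc2).
  rewrite (col_xor U (r2 + e - q) (be k.+1) nc2).
  by case: (al k); case: (be k.+1); case: (U false r2); case: (U false (r2 + e - q)).
move=> k hk.
have a1 := E1 k.+2 hk.
have a2 := E1 k.+1 (ltnW hk).
have a3 := E2 k.+1 (ltnW hk).
have a4 := E2 k (ltnW (ltnW hk)).
move: a1 a2 a3 a4.
case: (al k.+2); case: (al k.+1); case: (al k); case: (be k.+2); case: (be k.+1);
  by case: (U false r1 (+) U false (r1 + e)); case: (U false r2 (+) U false (r2 + e - q)).
Qed.


Lemma ncol_exists zeta q x : 2 <= q -> const_length zeta q ->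
  is_limit_fixed_point zeta x -> primitive zeta -> aperiodic zeta ->
  exists r, r < q /\ nth false (zeta false) r != nth false (zeta true) r.
Proof.
move=> q2 hc hx hpr hap.
have hn := zeta_neq zeta q x q2 hc hx hpr hap.
apply: NNPP => hne; move/negP: hn; apply; apply/eqP.
apply: (@eq_from_nth _ false); first by rewrite !hc.
move=> r; rewrite hc => hr; apply/eqP; apply: NNPP => hneq; apply: hne.
by exists r; split => //; apply/negP.
Qed.

Lemma recog zeta q x : 2 <= q -> const_length zeta q ->
  is_limit_fixed_point zeta x -> primitive zeta -> aperiodic zeta ->
  exists B, forall i j L, (forall p, p < L -> x (i + p) = x (j + p)) ->
    i %% q != j %% q -> L < B.
Proof.
move=> q2 hc hx hpr hap.
apply: NNPP => hneg.
have q0 : 0 < q by lia.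
apply: (periodic_false zeta q x 2 q2 hc hx hpr hap isT).
apply: (period2 zeta q x q2 hc hx hpr) => M.
have [i [j [L [h1 [h2 h3]]]]] : exists i j L,
   [/\ (forall p, p < L -> x (i + p) = x (j + p)), i %% q != j %% q & q * (M + 4) <= L].
  apply: NNPP => hn; apply: hneg; exists (q * (M + 4)) => i j L h1 h2.
  rewrite ltnNge; apply/negP => h3; apply: hn; by exists i, j, L.
set s := i %/ q + 1.
have hdi := divn_eq i q.
have hmi : i %% q < q by rewrite ltn_mod.
set d := q * s - i.
have hqs : q * s = i %/ q * q + q by rewrite /s mulnDr muln1 mulnC.
have hd1 : d <= q by rewrite /d; lia.
have hid : i + d = q * s by rewrite /d; lia.
set J := j + d.
set t := J %/ q; set e := J %% q.
have hJ : J = t * q + e := divn_eq J q.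
have he : e < q by rewrite ltn_mod.
have e0 : 0 < e.
  rewrite lt0n; apply/negP => /eqP e0.
  move: h2; rewrite -(eqn_modDr d) hid /J in e0 *.
  by rewrite modnMr; move: e0; rewrite /e /J => ->.
exists s => k hk.
have hN := ncol_exists zeta q x q2 hc hx hpr hap.
have := core (fun c r => nth false (zeta c) r) q e (fun k => x (s + k)) (fun k => x (t + k))
  (M + 3) e0 he hN.
have hrel : forall k r, k < M + 3 -> r < q ->
   nth false (zeta (x (s + k))) r = if r + e < q then nth false (zeta (x (t + k))) (r + e)
      else nth false (zeta (x (t + k.+1))) (r + e - q).
  move=> k' r hk' hr.
  rewrite -(x_block zeta q x _ _ q2 hc hx hr).
  have E : q * (s + k') + r = i + (d + q * k' + r) by rewrite mulnDr -hid; lia.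
  rewrite E h1; last first.
    have : q * k' + r < q * (M + 3) by nia.
    lia.
  have E2 : j + (d + q * k' + r) = q * t + e + q * k' + r by move: hJ; rewrite /J; lia.
  rewrite E2.
  case: ifP => hre.
    rewrite -(x_block zeta q x _ _ q2 hc hx hre); congr x; rewrite mulnDr; lia.
  have hre' : r + e - q < q by lia.
  rewrite -(x_block zeta q x _ _ q2 hc hx hre'); congr x; rewrite mulnDr mulnS; lia.
move=> /(_ hrel k) H; have := H (ltac:(lia)); rewrite /= -addn2 addnA => ->; done.
Qed.


Lemma col_inj (U : bool -> nat -> bool) r c c' : U false r != U true r ->
  U c r = U c' r -> c = c'.
Proof. by move=> h; rewrite (col_xor U r c h) (col_xor U r c' h); case: c; case: c'; case: (U false r). Qed.

Lemma col_diff (U : bool -> nat -> bool) r c c' : U c r != U c' r ->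
  (U false r != U true r) /\ c != c'.
Proof.
case: c; case: c' => //=; rewrite ?eqxx // => h; split => //.
by rewrite eq_sym.
Qed.

Ltac clb := repeat match goal with
  | H : is_true (~~ _) |- _ => clear H
  | H : is_true (_ == _) |- _ => clear H
  | H : is_true (_ && _) |- _ => clear H
  | H : forall _, _ |- _ => clear H
  | H : exists _, _ |- _ => clear H
  end.
Ltac lia' := clb; lia.

Lemma cong_line zeta q x : 2 <= q -> const_length zeta q ->
  is_limit_fixed_point zeta x -> primitive zeta -> aperiodic zeta ->
  exists c0, c0 < q /\ forall l i j, in_K x l i j -> i %% q = j %% q ->
    l <= q \/ exists m, K_nonempty x m /\ l = q * m + c0.
Proof.
move=> q2 hc hx hpr hap.
have q0 : 0 < q by lia'.
pose U c r := nth false (zeta c) r.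
pose nc r := U false r != U true r.
have [r0 [hr0 hn0]] := ncol_exists zeta q x q2 hc hx hpr hap.
have exP : exists r, (r < q) && nc r by exists r0; rewrite hr0.
case: (ex_minnP exP) => mn /andP [hmnq hncmn] hmin.
have ubP : forall r, (r < q) && nc r -> r <= q by move=> r /andP [h _]; lia'.
case: (ex_maxnP exP ubP) => mx /andP [hmxq hncmx] hmax.
have hmnmx : mn <= mx by apply: hmax; rewrite hmnq.
exists (q + mn - mx - 1); split; first by lia'.
move=> l i j [i0 j0 hmin0 [hij hrun hleft hright]] hmod.
have XB : forall s r, r < q -> x (q * s + r) = U (x s) r.
  by move=> s r hr; rewrite (x_block zeta q x s r q2 hc hx hr).
set a := i.-1; set b := j.-1.
have ha : i = a + 1 by rewrite /a; lia'.
have hb : j = b + 1 by rewrite /b; lia'.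
have hmodab : a %% q = b %% q.
  by apply/eqP; rewrite -(eqn_modDr 1) -ha -hb hmod.
have hab : x a != x b by have := hleft hmin0; rewrite /RP.
clearbody a b.
clear hij hmin0 hleft.
set s := a %/ q; set r := a %% q; set t := b %/ q.
have hA : a = q * s + r by rewrite /s /r mulnC -divn_eq.
have hB : b = q * t + r by rewrite /t /r hmodab mulnC -divn_eq.
have hr : r < q by rewrite ltn_mod.
clearbody s r t.
clear hmod hmodab.
have [ncr hst] : nc r /\ x s != x t.
  by apply: (col_diff U); rewrite -!XB // -hA -hB.
have [s' [r' [hE hr']]] : exists s' r', i + l = q * s' + r' /\ r' < q.
  by exists ((i + l) %/ q), ((i + l) %% q); rewrite mulnC -divn_eq ltn_mod.
have hss' : s <= s'.
  rewrite leqNgt; apply/negP => h.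
  have : q * s'.+1 <= q * s by rewrite leq_mul2l h orbT.
  move: hE hA; lia'.
have hEb : j + l = q * (t + (s' - s)) + r'.
  have [dd hdd] : exists dd, s' = s + dd by exists (s' - s); lia'.
  move: hE hA hB; rewrite hdd; lia'.
have hright' : x (i + l) != x (j + l) by have := hright; rewrite /RP.
have [ncr' hst'] : nc r' /\ x s' != x (t + (s' - s)).
  by apply: (col_diff U); rewrite -!XB // -hE -hEb.
case: (ltngtP s s') => hs; last first.
- by left; move: hE hA; rewrite hs; lia'.
- lia'.
right.
have [m hs'm] : exists m, s' = s + 1 + m by exists (s' - s - 1); lia'.
have hl : l = q * (m + 1) + r' - r - 1.
  move: hE hA; rewrite hs'm; lia'.
have hrmx : r = mx.
  have top : forall rr, r < rr -> rr < q -> ~~ nc rr.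
    move=> rr h1 h2; apply/negP => hnc.
    have hlt : rr - r - 1 < l by move: hl; lia'.
    have := hrun _ hlt; rewrite /RP => /eqP.
    have -> : i + (rr - r - 1) = q * s + rr by lia'.
    have -> : j + (rr - r - 1) = q * t + rr by lia'.
    rewrite !XB // => /(col_inj U rr _ _ hnc) /eqP; by rewrite (negbTE hst).
  have h1 : r <= mx by apply: hmax; rewrite hr ncr.
  case: (ltngtP r mx) h1 => // h2 _.
  by move: (top mx h2 hmxq); rewrite hncmx.
have hrmn : r' = mn.
  have bot : forall rr, rr < r' -> ~~ nc rr.
    move=> rr h1; apply/negP => hnc.
    have hlt : l - (r' - rr) < l by move: hl; lia'.
    have := hrun _ hlt; rewrite /RP => /eqP.
    have -> : i + (l - (r' - rr)) = q * s' + rr by move: hE hl; lia'.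
    have -> : j + (l - (r' - rr)) = q * (t + (s' - s)) + rr by move: hEb hl; lia'.
    have hrq : rr < q by lia'.
    rewrite !XB //.
    move=> /(col_inj U rr _ _ hnc) /eqP; by rewrite (negbTE hst').
  have h1 : mn <= r' by apply: hmin; rewrite hr' ncr'.
  case: (ltngtP mn r') h1 => // h2 _.
  by move: (bot mn h2); rewrite hncmn.
exists m; split; last by rewrite hl hrmx hrmn; lia'.
exists (s + 1), (t + 1).
have hst0 : s != t by apply: contraNneq hst => ->.
split; rewrite ?addn1 // ?leq_min //.
split.
- by rewrite eqSS.
- move=> k hk; rewrite /RP; apply/eqP.
  have hkm : q * k.+1 <= q * m by rewrite leq_mul2l; lia'.
  have hlt : q * k + q - 1 < l by move: hl hkm; lia'.
  have := hrun _ hlt; rewrite /RP => /eqP.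
  have -> : i + (q * k + q - 1) = q * (s.+1 + k) + r by rewrite mulnDr mulnSr; lia'.
  have -> : j + (q * k + q - 1) = q * (t.+1 + k) + r by rewrite mulnDr mulnSr; lia'.
  by rewrite !XB // => /(col_inj U r _ _ ncr).
- by move=> _; rewrite /= /RP.
- rewrite /RP.
  have -> : s.+1 + m = s' by lia'.
  by have -> : t.+1 + m = t + (s' - s) by lia'.
Qed.


Lemma lengths zeta q x : 2 <= q -> const_length zeta q ->
  is_limit_fixed_point zeta x -> primitive zeta -> aperiodic zeta ->
  exists B c0, [/\ c0 < q, q < B & forall l, K_nonempty x l -> B <= l ->
    exists m, K_nonempty x m /\ l = q * m + c0].
Proof.
move=> q2 hc hx hpr hap.
have [B1 hB1] := recog zeta q x q2 hc hx hpr hap.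
have [c0 [hc0 hcong]] := cong_line zeta q x q2 hc hx hpr hap.
exists (maxn B1 q.+1), c0; split => //; first by rewrite leq_max ltnSn orbT.
move=> l [i [j hK]] hl.
case: (eqVneq (i %% q) (j %% q)) => hm.
  case: (hcong l i j hK hm) => // hle; exfalso; move: hl hle; lia.
exfalso.
have hag : forall p, p < l -> x (i + p) = x (j + p).
  by case: hK => _ _ _ [_ hrun _ _] p hp; apply/eqP; exact: hrun.
have := hB1 i j l hag hm; move: hl; lia.
Qed.

Local Open Scope ring_scope.

Lemma sum_mono (R : realType) (f : nat -> R) m n : (forall l, 0 <= f l) -> (m <= n)%N ->
  \sum_(0 <= l < m) f l <= \sum_(0 <= l < n) f l.
Proof.
move=> f0 mn; rewrite (big_cat_nat (leq0n m) mn) /= lerDl.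
by apply: sumr_ge0 => i _; exact: f0.
Qed.

Lemma sum_blocks (R : realType) (G : nat -> R) q n :
  \sum_(0 <= l < (q * n)%N) G l = \sum_(0 <= m < n) \sum_(0 <= r < q) G (q * m + r)%N.
Proof.
elim: n => [|n IH]; first by rewrite muln0 !big_geq.
rewrite big_nat_recr //= -IH mulnSr (big_cat_nat (leq0n (q * n)%N) (leq_addr q (q * n)%N)) /=.
congr (_ + _).
rewrite -{1}[(q * n)%N]add0n big_addn addKn.
by apply: eq_bigr => i _; rewrite addnC.
Qed.

Lemma sum_single (R : realType) (G : nat -> R) q c0 : (c0 < q)%N ->
  (forall r, (r < q)%N -> r != c0 -> G r = 0) -> \sum_(0 <= r < q) G r = G c0.
Proof.
move=> hc HG.
rewrite (big_cat_nat (leq0n c0) (ltnW hc)) /= (big_ltn hc).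
rewrite [X in X + _]big_nat_cond big1; last by move=> i /andP [/andP [_ hi] _]; apply: HG; lia.
rewrite [X in _ + (_ + X)]big_nat_cond big1; last by move=> i /andP [/andP [hi hi'] _]; apply: HG; lia.
by rewrite add0r addr0.
Qed.

Lemma partial_bound (R : realType) (S : nat -> Prop) q B c0 : (2 <= q)%N -> (c0 < q)%N ->
  (q < B)%N -> (forall l, S l -> (B <= l)%N -> exists m, S m /\ l = (q * m + c0)%N) ->
  forall n, \sum_(0 <= l < n) (if `[< S l >] then (l%:R : R)^-1 else 0) <=
     2 * \sum_(0 <= l < B) (l%:R : R)^-1.
Proof.
move=> q2 hc0 hqB HS n.
set a := fun l => if `[< S l >] then (l%:R : R)^-1 else 0.
set H := \sum_(0 <= l < B) (l%:R : R)^-1.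
have a0 : forall l, 0 <= a l by move=> l; rewrite /a; case: ifP => // _; rewrite invr_ge0 ler0n.
pose b l := if (l < B)%N then (l%:R : R)^-1 else 0.
pose g l := if (B <= l)%N && `[< S l >] then (l%:R : R)^-1 else 0.
have b0 : forall l, 0 <= b l by move=> l; rewrite /b; case: ifP => // _; rewrite invr_ge0 ler0n.
have g0 : forall l, 0 <= g l by move=> l; rewrite /g; case: ifP => // _; rewrite invr_ge0 ler0n.
have hab : forall l, a l <= b l + g l.
  move=> l; rewrite /a /b /g; case: (ltnP l B) => hl /=.
    by case: ifP => _; rewrite addr0 // invr_ge0 ler0n.
  by rewrite add0r.
have sb : \sum_(0 <= l < n) b l <= H.
  apply: (le_trans (sum_mono R b _ _ b0 (leq_maxl n B))).
  rewrite (big_cat_nat (leq0n B) (leq_maxr n B)) /=.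
  have Z : \sum_(B <= l < maxn n B) b l = 0.
    by rewrite big_nat_cond big1 // => i /andP [/andP [hi _] _]; rewrite /b ltnNge hi.
  rewrite Z addr0 (@eq_big_nat _ _ _ 0 B b (fun l => (l%:R : R)^-1)) // => i /andP [_ hi].
  by rewrite /b hi.
have q0 : (0 < q)%N by lia.
have sg : \sum_(0 <= l < n) g l <= (\sum_(0 <= l < n) a l) / q%:R.
  apply: (le_trans (sum_mono R g _ _ g0 (_ : (n <= q * n)%N))); first by rewrite leq_pmull.
  rewrite sum_blocks mulr_suml; apply: ler_sum => m _.
  rewrite (sum_single R _ q c0 hc0); last first.
    move=> r hr hne; rewrite /g; case: ifP => // /andP [hB /asboolP hS].
    have [m' [_ he]] := HS _ hS hB.
    exfalso; move: he => /(congr1 (modn^~ q)).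
    rewrite [(q * m)%N]mulnC [(q * m')%N]mulnC !modnMDl !modn_small //.
    by move=> e; move/eqP: hne; apply.
  rewrite /g; case: ifP; last by move=> _; apply: divr_ge0 => //; rewrite ler0n.
  move=> /andP [hB /asboolP hS].
  have [m' [hS' he]] := HS _ hS hB.
  have hmm : m' = m.
    apply/eqP; rewrite -(eqn_pmul2l q0); apply/eqP; lia.
  subst m'.
  have m0 : (0 < m)%N.
    rewrite lt0n; apply/negP => /eqP m0; move: hB; rewrite m0 muln0 add0n; lia.
  rewrite /a; case: asboolP => // _.
  have p1 : (0 < m * q)%N by rewrite muln_gt0 q0 m0.
  have p2 : (0 < q * m + c0)%N by rewrite addn_gt0 mulnC p1.
  rewrite -invfM -natrM lef_pV2 ?posrE ?ltr0n //.
  by rewrite ler_nat mulnC leq_addr.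
have hT : \sum_(0 <= l < n) a l <= H + (\sum_(0 <= l < n) a l) / q%:R.
  apply: (le_trans (ler_sum _ (fun l _ => hab l))).
  by rewrite big_split /=; exact: lerD sb sg.
have T0 : 0 <= \sum_(0 <= l < n) a l by apply: sumr_ge0 => l _.
have hq : (\sum_(0 <= l < n) a l) / q%:R <= (\sum_(0 <= l < n) a l) / 2.
  apply: ler_wpM2l => //.
  by rewrite lef_pV2 ?posrE ?ltr0n // ler_nat.
lra.
Qed.

Lemma series_fin (R : realType) (S : nat -> Prop) q B c0 : (2 <= q)%N -> (c0 < q)%N ->
  (q < B)%N -> (forall l, S l -> (B <= l)%N -> exists m, S m /\ l = (q * m + c0)%N) ->
  (\sum_(1 <= l <oo | `[< S l >]) ((l%:R : R)^-1)%:E < +oo)%E.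
Proof.
move=> q2 hc0 hqB HS.
apply: (le_lt_trans _ (ltry (2 * \sum_(0 <= l < B) (l%:R : R)^-1))).
apply: lime_le.
  by apply: is_cvg_nneseries => k _ _; rewrite lee_fin invr_ge0 ler0n.
apply: nearW => n.
rewrite sumEFin lee_fin.
apply: le_trans (partial_bound R S q B c0 q2 hc0 hqB HS n).
case: n => [|n]; first by rewrite !big_geq.
rewrite (big_ltn (ltn0Sn n)) /= invr0 big_mkcond /=.
by case: ifP; rewrite add0r.
Qed.

Theorem lemma3p2 (zeta : bool -> seq bool) (q : nat) (x : nat -> bool) :
  (2 <= q)%N ->
  const_length zeta q ->
  primitive zeta ->
  aperiodic zeta ->
  nth true (zeta false) 0 = false ->
  is_limit_fixed_point zeta x ->
  (\sum_(1 <= l <oo | `[< K_nonempty x l >]) ((l%:R : Rdefinitions.R)^-1)%:E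
     < +oo)%E.
Proof.
move=> q2 hc hpr hap _ hx.
have [B [c0 [hc0 hqB HS]]] := lengths zeta q x q2 hc hx hpr hap.
exact: (series_fin Rdefinitions.R (K_nonempty x) q B c0 q2 hc0 hqB HS).
Qed.
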